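(* Let $r\in\mathcal R_n$ be a distance matrix of order $n$. For any two vectors $a=(a_1,\dots,a_n)\in A(r)$ and $b=(b_1,\dots,b_n)\in A(r)$ there exists a real number $h\ge0$ such that $\bar b=(b_1,\dots,b_n,h)\in A(r^a)$ (and also $\bar a=(a_1,\dots,a_n,h)\in A(r^b)$).
   Context: $\mathcal R_n$ is the set of real symmetric $n\times n$ matrices with zero diagonal, nonnegative entries and $r_{i,k}+r_{k,j}\ge r_{i,j}$. For $r\in\mathcal R_n$, $A(r)=\{a\in\mathbb R^n: |a_i-a_j|\le r_{i,j}\le a_i+a_j\ \forall i,j\}$ is the set of admissible vectors, and for $a\in A(r)$, $r^a\in\mathcal R_{n+1}$ is the matrix obtained by adding $a$ as last row and last column (with $0$ in the corner). *)

(* Defs.v *)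
From HB Require Import structures.
From mathcomp Require Import all_boot all_order all_algebra.
From mathcomp Require Import reals.
Set Implicit Arguments. Unset Strict Implicit. Unset Printing Implicit Defensive.
Import Order.TTheory GRing.Theory Num.Theory.
Local Open Scope ring_scope.

Definition distR (R : realType) (n : nat) (r : 'M[R]_n) : Prop :=
  (forall i j, r i j = r j i) /\
  (forall i, r i i = 0) /\
  (forall i j, 0 <= r i j) /\
  (forall i j k, r i j <= r i k + r k j).

Definition admissible (R : realType) (n : nat) (r : 'M[R]_n) (a : 'rV[R]_n) : Prop :=
  forall i j, `|a 0 i - a 0 j| <= r i j /\ r i j <= a 0 i + a 0 j.

(* r^a : add a as last row and last column, 0 in the corner *)
Definition ext_mx (R : realType) (n : nat) (r : 'M[R]_n) (a : 'rV[R]_n) : 'M[R]_n.+1 :=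
  \matrix_(i, j)
    match unlift ord_max i, unlift ord_max j with
    | Some i', Some j' => r i' j'
    | Some i', None => a 0 i'
    | None, Some j' => a 0 j'
    | None, None => 0
    end.

Definition ext_vec (R : realType) (n : nat) (b : 'rV[R]_n) (h : R) : 'rV[R]_n.+1 :=
  \row_i match unlift ord_max i with Some i' => b 0 i' | None => h end.

(* Main.v *)
Require Import Defs.
From HB Require Import structures.
From mathcomp Require Import all_boot all_order all_algebra.
From mathcomp Require Import reals lra.
Import Order.TTheory GRing.Theory Num.Theory.
Local Open Scope ring_scope.

Lemma ext_adm (R : realType) (n : nat) (r : 'M[R]_n) (a b : 'rV[R]_n) (h : R) :
  admissible r b -> 0 <= h ->
  (forall i, `|b 0 i - h| <= a 0 i /\ a 0 i <= b 0 i + h) ->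
  admissible (ext_mx r a) (ext_vec b h).
Proof.
move=> Hb h0 Hh i j; rewrite !mxE.
case: (unliftP ord_max i) => [i'|] _; case: (unliftP ord_max j) => [j'|] _.
- exact: Hb.
- exact: Hh.
- by rewrite distrC [h + _]addrC; exact: Hh.
- by rewrite subrr normr0 lexx addr_ge0.
Qed.

Theorem lemma3 (R : realType) (n : nat) (r : 'M[R]_n) (a b : 'rV[R]_n) :
  distR r -> admissible r a -> admissible r b ->
  exists h : R, 0 <= h /\
    admissible (ext_mx r a) (ext_vec b h) /\
    admissible (ext_mx r b) (ext_vec a h).
Proof.
move=> [_ [_ [_ _]]] Ha Hb.
have key : forall i j, `|a 0 i - b 0 i| <= a 0 j + b 0 j.
  move=> i j; have [Ha1 Ha2] := Ha i j; have [Hb1 Hb2] := Hb i j.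
  move: Ha1 Hb1; rewrite !ler_norml => /andP[? ?] /andP[? ?].
  apply/andP; split; lra.
pose h := \big[Num.max/0]_i `|a 0 i - b 0 i|.
have hge : forall i, `|a 0 i - b 0 i| <= h.
  move=> i; rewrite /h (bigD1 i) //= le_max lexx //.
have hle : forall j, h <= a 0 j + b 0 j.
  move=> j; rewrite /h; apply: (big_ind (fun x => x <= a 0 j + b 0 j)).
  - exact: le_trans (normr_ge0 _) (key j j).
  - by move=> x y Hx Hy; rewrite ge_max Hx Hy.
  - by move=> i _; exact: key.
have h0 : 0 <= h by rewrite /h; apply: (big_ind (fun x => 0 <= x)) => //;
  move=> x y Hx Hy; rewrite le_max Hx.
exists h; split => //; split; apply: ext_adm => // i;
  have := hge i; have := hle i; rewrite ler_norml => ? /andP[? ?]; split;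
  rewrite ?ler_norml; try (apply/andP; split); lra.
Qed.
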